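(* Let $n\ge2$, $1\le s\le\lfloor n/2\rfloor$, $0\le t\le\lfloor n/2\rfloor$. Let $E_0\subset\mathbb F_2^s$, $\overline{E_0}=\mathbb F_2^s\setminus E_0$, and $E_1=\overline{E_0}\times\mathbb F_2^t$. Let $\phi_0:E_0\to\mathbb F_2^{n-s}$ and $\phi_1:E_1\to\mathbb F_2^{n-s-t}$ be injective maps. For $X=(x_1,\dots,x_n)\in\mathbb F_2^n$ write $X_{(i,j)}=(x_i,\dots,x_j)$. Define $f:\mathbb F_2^n\to\mathbb F_2$ by $f(X)=\phi_0(X_{(1,s)})\cdot X_{(s+1,n)}$ if $X_{(1,s)}\in E_0$, and $f(X)=\phi_1(X_{(1,s+t)})\cdot X_{(s+t+1,n)}$ if $X_{(1,s+t)}\in E_1$. Let $T_0=\phi_0(E_0)$ and $T_1=\phi_1(E_1)$. Then: (a) if $t\ne0$ and $T_0\subset\mathbb F_2^t\times\overline{T_1}$, where $\overline{T_1}=\mathbb F_2^{n-s-t}\setminus T_1$, then $W_f(\omega)\in\{0,\pm2^{n-s},\pm2^{n-s-t}\}$ for all $\omega\in\mathbb F_2^n$; (b) if $t=0$, $T_0\cap T_1\ne\emptyset$ and $T_0\ne T_1$, then $W_f(\omega)\in\{0,\pm2^{n-s},\pm2^{n-s+1}\}$ for all $\omega\in\mathbb F_2^n$.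
   Context: $W_f(\omega)=\sum_{X\in\mathbb F_2^n}(-1)^{f(X)\oplus\omega\cdot X}$, with $\cdot$ the dot product over $\mathbb F_2$. *)

(* Defs.v *)
(* F_2^m is modelled as {ffun 'I_m -> bool} (bit i = x_{i+1}). *)
From HB Require Import structures.
From mathcomp Require Import all_boot all_order all_algebra.
Set Implicit Arguments. Unset Strict Implicit. Unset Printing Implicit Defensive.
Import Order.TTheory GRing.Theory Num.Theory.

Notation bvec m := {ffun 'I_m -> bool}.

Definition bit (n : nat) (X : bvec n) (k : nat) : bool :=
  oapp X false (insub k : option 'I_n).

(* sub_vec X a m = (x_{a+1}, ..., x_{a+m});  X_(i,j) = sub_vec X (i-1) (j-i+1) *)
Definition sub_vec (n : nat) (X : bvec n) (a m : nat) : bvec m :=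
  [ffun i : 'I_m => bit X (a + i)].

Definition dotb (m : nat) (x y : bvec m) : bool :=
  \big[addb/false]_(i < m) (x i && y i).

Definition walsh (n : nat) (f : bvec n -> bool) (w : bvec n) : int :=
  (\sum_(X : bvec n) (-1) ^+ (f X (+) dotb w X))%R.

(* E_1 = complement(E_0) x F_2^t, as a subset of F_2^(s+t) *)
Definition E1set (s t : nat) (E0 : {set bvec s}) : {set bvec (s + t)} :=
  [set y : bvec (s + t) | sub_vec y 0 s \notin E0].

Definition fcons (n s t : nat) (E0 : {set bvec s})
  (phi0 : bvec s -> bvec (n - s)) (phi1 : bvec (s + t) -> bvec (n - s - t))
  (X : bvec n) : bool :=
  if sub_vec X 0 s \in E0
  then dotb (phi0 (sub_vec X 0 s)) (sub_vec X s (n - s))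
  else dotb (phi1 (sub_vec X 0 (s + t))) (sub_vec X (s + t) (n - s - t)).

(* Main.v *)
Require Import Defs.
From HB Require Import structures.
From mathcomp Require Import all_boot all_order all_algebra.
From mathcomp Require Import zify.
Import Order.TTheory GRing.Theory Num.Theory.
Set Implicit Arguments. Unset Strict Implicit. Unset Printing Implicit Defensive.

Lemma bitE n (X : bvec n) (i : 'I_n) : bit X i = X i.
Proof. by rewrite /bit valK. Qed.

Lemma bit_out n (X : bvec n) k : n <= k -> bit X k = false.
Proof. by move=> h; rewrite /bit insubF // ltnNge h. Qed.

Lemma bit_sub n (X : bvec n) a m i : bit (sub_vec X a m) i = (i < m) && bit X (a + i).
Proof.
case: (ltnP i m) => h /=; last by rewrite bit_out.
by have := bitE (sub_vec X a m) (Ordinal h); rewrite ffunE /=.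
Qed.

Lemma sub_vec_sub n (X : bvec n) a m b k : b + k <= m ->
  sub_vec (sub_vec X a m) b k = sub_vec X (a + b) k.
Proof.
move=> h; apply/ffunP => i; rewrite !ffunE bit_sub addnA.
by have -> : b + i < m by have := ltn_ord i; lia.
Qed.

Definition splitv k m n (X : bvec n) : bvec k * bvec m := (sub_vec X 0 k, sub_vec X k m).
Definition joinv k m n (p : bvec k * bvec m) : bvec n :=
  [ffun i : 'I_n => if i < k then bit p.1 i else bit p.2 (i - k)].

Lemma splitK k m n : k + m = n -> cancel (@splitv k m n) (@joinv k m n).
Proof.
move=> e X; apply/ffunP => i; rewrite ffunE /=.
case: ifP => h; rewrite bit_sub.
  by rewrite h add0n bitE.
have := ltn_ord i; have -> : i - k < m by have := ltn_ord i; lia.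
move=> _ /=; rewrite subnKC ?bitE //; lia.
Qed.

Lemma joinK k m n : k + m = n -> cancel (@joinv k m n) (@splitv k m n).
Proof.
move=> e [a z]; rewrite /splitv; congr pair; apply/ffunP => j; rewrite ffunE /=.
  have jn : j < n by have := ltn_ord j; lia.
  by have := bitE (@joinv k m n (a, z)) (Ordinal jn); rewrite /= add0n => ->; rewrite ffunE /= ltn_ord bitE.
have jn : k + j < n by have := ltn_ord j; lia.
have := bitE (@joinv k m n (a, z)) (Ordinal jn); rewrite /= => ->.
by rewrite ffunE /= ltnNge leq_addr /= addKn bitE.
Qed.

Lemma dotb_nat m (x y : bvec m) :
  dotb x y = \big[addb/false]_(0 <= i < m) (bit x i && bit y i).
Proof. by rewrite /dotb big_mkord; apply: eq_bigr => i _; rewrite !bitE. Qed.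

Lemma dotb_split k m n (w X : bvec n) : k + m = n ->
  dotb w X = dotb (sub_vec w 0 k) (sub_vec X 0 k) (+) dotb (sub_vec w k m) (sub_vec X k m).
Proof.
move=> e; rewrite !dotb_nat (@big_cat_nat _ _ _ k) //=; last by lia.
congr addb.
  by apply: eq_big_nat => i /andP[_ ik]; rewrite !bit_sub ik !add0n.
rewrite -{1}(add0n k) big_addn.
have -> : n - k = m by lia.
by apply: eq_big_nat => i /andP[_ ik]; rewrite !bit_sub ik addnC.
Qed.
Local Open Scope ring_scope.

Definition flip m (i : 'I_m) (z : bvec m) : bvec m :=
  [ffun j => if j == i then ~~ z j else z j].

Lemma flipK m (i : 'I_m) : involutive (flip i).
Proof. by move=> z; apply/ffunP => j; rewrite !ffunE; case: eqP => // _; rewrite negbK. Qed.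

Lemma dotb_flip m (i : 'I_m) (c z : bvec m) : dotb c (flip i z) = dotb c z (+) c i.
Proof.
rewrite /dotb (bigD1 i) //= [in RHS](bigD1 i) //= ffunE eqxx.
rewrite (eq_bigr (fun j => c j && z j)); last by move=> j /negPf ji; rewrite ffunE ji.
by case: (c i); case: (z i); case: (\big[_/_]_(_ | _) _).
Qed.

Lemma char_sum m (c d : bvec m) :
  \sum_(z : bvec m) ((-1) ^+ (dotb c z (+) dotb d z) : int) =
  if c == d then 2%:Z ^+ m else 0.
Proof.
case: eqP => [<-|cd].
  under eq_bigr do rewrite addbb expr0.
  rewrite sumr_const card_ffun card_bool card_ord.
  by rewrite natrX.
have [i ci] : exists i, c i != d i.
  apply/existsP; apply: contra_notT cd => /existsPn H; apply/ffunP => i.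
  by have := H i; rewrite negbK => /eqP.
set S := \sum_(z : bvec m) _.
have : S = - S.
  rewrite {2}/S -sumrN /S (reindex_inj (inv_inj (flipK i))); apply: eq_bigr => z _.
  rewrite !dotb_flip; move: ci; case: (c i); case: (d i) => //= _;
  by case: (dotb c z); case: (dotb d z); rewrite /= ?expr0 ?expr1 ?opprK.
by move=> /eqP; rewrite -addr_eq0 -mulr2n mulrn_eq0 /= => /eqP.
Qed.

Lemma sum_inj (T : finType) (U : finType) (P : {set T}) (g : T -> U) (y : U)
  (h : T -> bool) (C : int) : {in P &, injective g} ->
  exists e : bool, \sum_(a : T) (if a \in P then (-1) ^+ h a * (if g a == y then C else 0) else 0)
   = if y \in g @: P then (-1) ^+ e * C else 0.
Proof.
move=> inj; case: (boolP (y \in g @: P)) => yin.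
  case/imsetP: yin => a0 a0P ->; exists (h a0).
  rewrite (bigD1 a0) //= a0P eqxx big1 ?addr0 ?mulr1 // => a aa0.
  case: ifP => // aP; case: eqP; last by rewrite mulr0.
  by move=> /(inj _ _ aP a0P) /eqP; rewrite (negbTE aa0).
exists false; apply: big1 => a _; case: ifP => // aP.
case: eqP; last by rewrite mulr0.
by move=> ga; move: yin; rewrite -ga imset_f.
Qed.

Lemma walsh_piece n k m (P : {set bvec k}) (g : bvec k -> bvec m) (w : bvec n) :
  k + m = n -> {in P &, injective g} ->
  exists e : bool,
   \sum_(X : bvec n) (if sub_vec X 0 k \in P then
      (-1) ^+ (dotb (g (sub_vec X 0 k)) (sub_vec X k m) (+) dotb w X) else 0 : int)
   = if sub_vec w k m \in g @: P then (-1) ^+ e * 2%:Z ^+ m else 0.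
Proof.
move=> e inj.
set wa := sub_vec w 0 k; set wz := sub_vec w k m.
have -> : \sum_(X : bvec n) (if sub_vec X 0 k \in P then
      (-1) ^+ (dotb (g (sub_vec X 0 k)) (sub_vec X k m) (+) dotb w X) else 0 : int)
  = \sum_(a : bvec k) \sum_(z : bvec m) (if a \in P then
      (-1) ^+ (dotb (g a) z (+) (dotb wa a (+) dotb wz z)) else 0 : int).
  rewrite pair_big /= (reindex (@splitv k m n)); last first.
    by apply: onW_bij; exists (@joinv k m n); [apply: splitK | apply: joinK].
  by apply: eq_bigr => X _; rewrite (dotb_split w X e).
have [e' He] := @sum_inj _ _ P g wz (fun a => dotb wa a) (2%:Z ^+ m) inj.
exists e'; rewrite -He; apply: eq_bigr => a _; case: ifP => aP; last by rewrite big1.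
rewrite -char_sum mulr_sumr; apply: eq_bigr => z _.
by rewrite addbCA signr_addb.
Qed.

Local Close Scope ring_scope.

Theorem mainTheorem10 (n s t : nat) (E0 : {set bvec s})
  (phi0 : bvec s -> bvec (n - s)) (phi1 : bvec (s + t) -> bvec (n - s - t)) :
  2 <= n -> 1 <= s -> s <= n./2 -> t <= n./2 ->
  {in E0 &, injective phi0} ->
  {in E1set t E0 &, injective phi1} ->
  let T0 := phi0 @: E0 in
  let T1 := phi1 @: E1set t E0 in
  let f := fcons E0 phi0 phi1 in
  (* (a) *)
  (t != 0 ->
   (forall y, y \in T0 -> sub_vec y t (n - s - t) \notin T1) ->
   forall w : bvec n,
     walsh f w \in [:: 0%R; (2%:Z ^+ (n - s))%R; (- 2%:Z ^+ (n - s))%R;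
                        (2%:Z ^+ (n - s - t))%R; (- 2%:Z ^+ (n - s - t))%R])
  /\
  (* (b): when t = 0, F_2^(n-s-t) = F_2^(n-s); T0 is transported along the
     identity re-indexing y |-> sub_vec y 0 (n-s-t) *)
  (t = 0 ->
   [set sub_vec y 0 (n - s - t) | y in T0] :&: T1 != set0 ->
   [set sub_vec y 0 (n - s - t) | y in T0] != T1 ->
   forall w : bvec n,
     walsh f w \in [:: 0%R; (2%:Z ^+ (n - s))%R; (- 2%:Z ^+ (n - s))%R;
                        (2%:Z ^+ (n - s + 1))%R; (- 2%:Z ^+ (n - s + 1))%R]).
Proof.
Local Open Scope ring_scope.
move=> n2 s1 sn tn inj0 inj1 T0 T1 f.
have key : forall w : bvec n, exists e0 e1 : bool,
  walsh f w = ((if sub_vec w s (n - s) \in T0 then (-1) ^+ e0 * 2%:Z ^+ (n - s) else 0)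
    + (if sub_vec (sub_vec w s (n - s)) t (n - s - t) \in T1
       then (-1) ^+ e1 * 2%:Z ^+ (n - s - t) else 0))%R.
  move=> w.
  have [e0 H0] := @walsh_piece n s (n - s) E0 phi0 w ltac:(lia) inj0.
  have [e1 H1] := @walsh_piece n (s + t) (n - s - t) (E1set t E0) phi1 w ltac:(lia) inj1.
  exists e0, e1; rewrite sub_vec_sub ?addn0 -?H0 -?H1; last by lia.
  rewrite /walsh -big_split; apply: eq_bigr => X _ /=.
  rewrite /f /fcons /E1set inE sub_vec_sub ?add0n //; last by lia.
  by case: ifP => _; rewrite ?addr0 ?add0r.
split.
  move=> t0 hyp w; have [e0 [e1 ->]] := key w.
  case: ifP => A; case: ifP => B.
  - by move: (hyp _ A); rewrite B.
  - by case: e0; rewrite ?expr0 ?expr1 ?mul1r ?mulN1r addr0 !inE eqxx ?orbT.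
  - by case: e1; rewrite ?expr0 ?expr1 ?mul1r ?mulN1r add0r !inE eqxx ?orbT.
  - by rewrite addr0 !inE eqxx.
have h2 : forall y : int, y * 2%:Z = y + y by move=> y; rewrite -mulr2n -mulr_natr.
move=> t0 _ _ w; subst t; have [e0 [e1 ->]] := key w.
case: ifP => A; case: ifP => B; rewrite ?subn0 addn1 exprSr;
set x := 2%:Z ^+ (n - s); case: e0; case: e1;
  rewrite ?expr0 ?expr1 ?mul1r ?mulN1r ?addr0 ?add0r !inE ?eqxx ?orbT //.
  all: by rewrite ?subrr ?addNr ?eqxx // h2 ?opprD ?eqxx ?orbT.
Qed.
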